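(* Let $n$ and $p$ be positive integers with $p \leq \tfrac{2n}{3} - 1$. Let $\mathcal{G} = (\mathcal{V}, \mathcal{E})$ be a connected undirected graph with vertex set $\mathcal{V} = \{1, \ldots, N\}$, and define $U : \mathsf{St}(p,n)^N \to \mathbb{R}$ by $$U(S_1, \ldots, S_N) = \sum_{\{i,j\} \in \mathcal{E}} \bigl(p - \langle S_i, S_j \rangle\bigr) = \tfrac12 \sum_{\{i,j\}\in\mathcal{E}} \|S_i - S_j\|^2 .$$ Then every (local) minimizer $(S_1,\ldots,S_N)$ of $U$ on $\mathsf{St}(p,n)^N$ belongs to the consensus manifold $$\mathcal{C} = \{(S_i)_{i=1}^N \in \mathsf{St}(p,n)^N \mid S_i = S_j \text{ for all } \{i,j\} \in \mathcal{E}\}.$$ That is, every connected graph is $\mathsf{St}(p,n)$-synchronizing.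
   Context: The compact real Stiefel manifold is $\mathsf{St}(p,n) = \{S \in \mathbb{R}^{n\times p} \mid S^\top S = I_p\}$, viewed as an embedded submanifold of $\mathbb{R}^{n\times p}$ with the Euclidean (Frobenius) inner product $\langle X, Y\rangle = \operatorname{tr}(X^\top Y)$ and norm $\|X\| = \langle X,X\rangle^{1/2}$. A graph $\mathcal{G}$ is called $\mathsf{St}(p,n)$-synchronizing (for the potential $U$ above) if all minimizers of $U$ belong to the consensus manifold $\mathcal{C}$. *)

(* Defs.v *)
From mathcomp Require Import all_boot all_order all_algebra.
From mathcomp Require Import reals.
Set Implicit Arguments. Unset Strict Implicit. Unset Printing Implicit Defensive.
Import Order.TTheory GRing.Theory Num.Theory.
Local Open Scope ring_scope.

Definition frob_inner (R : realType) (n p : nat) (X Y : 'M[R]_(n, p)) : R :=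
  \tr (X^T *m Y).
Definition frob_norm2 (R : realType) (n p : nat) (X : 'M[R]_(n, p)) : R :=
  frob_inner X X.

Definition stiefel (R : realType) (n p : nat) (S : 'M[R]_(n, p)) : Prop :=
  S^T *m S = 1%:M.

Definition simple_graph (N : nat) (e : rel 'I_N) : Prop :=
  (forall i j, e i j = e j i) /\ (forall i, ~~ e i i).

Definition graph_connected (N : nat) (e : rel 'I_N) : Prop :=
  forall i j, connect e i j.

Definition potential (R : realType) (n p N : nat) (e : rel 'I_N)
  (S : 'I_N -> 'M[R]_(n, p)) : R :=
  \sum_(i < N) \sum_(j < N | (i < j)%N && e i j) (p%:R - frob_inner (S i) (S j)).

Definition on_stiefel_N (R : realType) (n p N : nat) (S : 'I_N -> 'M[R]_(n, p)) : Prop :=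
  forall i, stiefel (S i).

Definition local_minimizer (R : realType) (n p N : nat) (e : rel 'I_N)
  (S : 'I_N -> 'M[R]_(n, p)) : Prop :=
  on_stiefel_N S /\
  exists eps : R, 0 < eps /\
    forall T : 'I_N -> 'M[R]_(n, p), on_stiefel_N T ->
      \sum_(i < N) frob_norm2 (T i - S i) < eps ->
      potential e S <= potential e T.

Definition consensus (R : realType) (n p N : nat) (e : rel 'I_N)
  (S : 'I_N -> 'M[R]_(n, p)) : Prop :=
  on_stiefel_N S /\ forall i j, e i j -> S i = S j.

(* Main.v *)
Require Import Defs.
From mathcomp Require Import all_boot all_order all_algebra.
From mathcomp Require Import reals.
From mathcomp Require Import ring lra.
Set Implicit Arguments. Unset Strict Implicit. Unset Printing Implicit Defensive.
Import Order.TTheory GRing.Theory Num.Theory.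
Local Open Scope ring_scope.


Section Inner.
Variable R : realType.
Local Notation "<< X , Y >>" := (frob_inner X Y).

Lemma innerE m q (X Y : 'M[R]_(m,q)) :
  << X, Y >> = \sum_(i < m) \sum_(j < q) X i j * Y i j.
Proof.
rewrite /frob_inner /mxtrace exchange_big /=; apply: eq_bigr => j _.
rewrite !mxE; apply: eq_bigr => i _; by rewrite !mxE.
Qed.

Lemma innerC m q (X Y : 'M[R]_(m,q)) : << X, Y >> = << Y, X >>.
Proof. by rewrite /frob_inner -mxtrace_tr trmx_mul trmxK. Qed.

Lemma innerDr m q (X Y Z : 'M[R]_(m,q)) : << X, Y + Z >> = << X, Y >> + << X, Z >>.
Proof. by rewrite /frob_inner mulmxDr mxtraceD. Qed.
Lemma innerDl m q (X Y Z : 'M[R]_(m,q)) : << Y + Z, X >> = << Y, X >> + << Z, X >>.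
Proof. by rewrite innerC innerDr !(innerC X). Qed.
Lemma innerZr m q a (X Y : 'M[R]_(m,q)) : << X, a *: Y >> = a * << X, Y >>.
Proof. by rewrite /frob_inner -scalemxAr mxtraceZ. Qed.
Lemma innerZl m q a (X Y : 'M[R]_(m,q)) : << a *: X, Y >> = a * << X, Y >>.
Proof. by rewrite innerC innerZr innerC. Qed.
Lemma innerNr m q (X Y : 'M[R]_(m,q)) : << X, - Y >> = - << X, Y >>.
Proof. by rewrite -scaleN1r innerZr mulN1r. Qed.
Lemma innerNl m q (X Y : 'M[R]_(m,q)) : << - X, Y >> = - << X, Y >>.
Proof. by rewrite -scaleN1r innerZl mulN1r. Qed.
Lemma innerBr m q (X Y Z : 'M[R]_(m,q)) : << X, Y - Z >> = << X, Y >> - << X, Z >>.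
Proof. by rewrite innerDr innerNr. Qed.
Lemma innerBl m q (X Y Z : 'M[R]_(m,q)) : << Y - Z, X >> = << Y, X >> - << Z, X >>.
Proof. by rewrite innerDl innerNl. Qed.
Lemma inner0r m q (X : 'M[R]_(m,q)) : << X, 0 >> = 0.
Proof. by rewrite /frob_inner mulmx0 mxtrace0. Qed.
Lemma inner0l m q (X : 'M[R]_(m,q)) : << 0, X >> = 0.
Proof. by rewrite innerC inner0r. Qed.
Lemma inner_sumr m q I (r : seq I) (P : pred I) (X : 'M[R]_(m,q)) F :
  << X, \sum_(i <- r | P i) F i >> = \sum_(i <- r | P i) << X, F i >>.
Proof.
elim/big_rec2: _ => [|i y1 y2 _ <-]; first by rewrite inner0r.
by rewrite innerDr.
Qed.
Lemma inner_suml m q I (r : seq I) (P : pred I) (X : 'M[R]_(m,q)) F :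
  << \sum_(i <- r | P i) F i, X >> = \sum_(i <- r | P i) << F i, X >>.
Proof. rewrite innerC inner_sumr; apply: eq_bigr => i _; exact: innerC. Qed.

Lemma inner_mull m k q (A : 'M[R]_(k,m)) (X : 'M[R]_(m,q)) Y :
  << A *m X, Y >> = << X, A^T *m Y >>.
Proof. by rewrite /frob_inner trmx_mul mulmxA. Qed.
Lemma inner_mulr m k q (B : 'M[R]_(q,k)) (X : 'M[R]_(m,q)) Y :
  << X *m B, Y >> = << X, Y *m B^T >>.
Proof.
by rewrite /frob_inner trmx_mul -mulmxA mxtrace_mulC -mulmxA.
Qed.
Lemma inner_tr m q (X Y : 'M[R]_(m,q)) : << X^T, Y^T >> = << X, Y >>.
Proof. by rewrite /frob_inner trmxK -mxtrace_tr trmx_mul trmxK mxtrace_mulC. Qed.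

Lemma inner_ge0 m q (X : 'M[R]_(m,q)) : 0 <= << X, X >>.
Proof.
rewrite innerE; apply: sumr_ge0 => i _; apply: sumr_ge0 => j _.
exact: sqr_ge0.
Qed.

Lemma inner_eq0 m q (X : 'M[R]_(m,q)) : << X, X >> = 0 -> X = 0.
Proof.
rewrite innerE => H; apply/matrixP => i j; rewrite mxE.
have H1 : forall i, \sum_(j < q) X i j * X i j = 0.
  move=> i0; apply/eqP; rewrite eq_le; apply/andP; split; last first.
    by apply: sumr_ge0 => j0 _; exact: sqr_ge0.
  have : \sum_(j < q) X i0 j * X i0 j <= \sum_(i < m) \sum_(j < q) X i j * X i j.
    rewrite [X in _ <= X](bigD1 i0) //= lerDl; apply: sumr_ge0 => i1 _.
    by apply: sumr_ge0 => j0 _; exact: sqr_ge0.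
  by rewrite H.
have := H1 i; move/eqP; rewrite psumr_eq0; last by move=> j0 _; exact: sqr_ge0.
move/allP => /(_ j (mem_index_enum _)) /implyP /(_ isT).
by rewrite mulf_eq0 orbb => /eqP.
Qed.

End Inner.

Section OkSec.
Variable R : realType.

Definition Near (P : R -> Prop) := exists r : R, 0 < r /\ forall s, `|s| < r -> P s.
Definition Ok (k : nat) (g : R -> R) :=
  exists K : R, Near (fun s => `|g s| <= K * `|s| ^+ k).

Lemma near_and P Q : Near P -> Near Q -> Near (fun s => P s /\ Q s).
Proof.
move=> [r1 [r1p H1]] [r2 [r2p H2]]; exists (Num.min r1 r2); split.
  by rewrite lt_min r1p r2p.
by move=> s; rewrite lt_min => /andP [a b]; split; [apply: H1|apply: H2].
Qed.

Lemma near_impl (P Q : R -> Prop) : (forall s, P s -> Q s) -> Near P -> Near Q.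
Proof. by move=> H [r [rp Hr]]; exists r; split => // s /Hr /H. Qed.

Lemma near_small c : 0 < c -> Near (fun s => `|s| < c).
Proof. by move=> cp; exists c. Qed.

Lemma near_all (I : finType) (P : I -> R -> Prop) :
  (forall i, Near (P i)) -> Near (fun s => forall i, P i s).
Proof.
move=> H.
suff : forall l : seq I, Near (fun s => forall i, i \in l -> P i s).
  move=> /(_ (enum I)); apply: near_impl => s Hs i; apply: Hs.
  by rewrite mem_enum.
elim=> [|a l IH]; first by exists 1; split => // s _ i; rewrite in_nil.
apply: near_impl (near_and (H a) IH) => s [Ha Hl] i.
by rewrite in_cons => /orP [/eqP -> //| /Hl].
Qed.

Lemma Ok_ext k (g h : R -> R) : Near (fun s => g s = h s) -> Ok k h -> Ok k g.
Proof.
move=> Hn [K HK]; exists K; apply: near_impl (near_and Hn HK).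
by move=> s [-> ->].
Qed.

Lemma Ok_extf k (g h : R -> R) : (forall s, g s = h s) -> Ok k h -> Ok k g.
Proof. by move=> H; apply: Ok_ext; exists 1; split => // s _; apply: H. Qed.

Lemma Ok_const c : Ok 0 (fun _ => c).
Proof. by exists `|c|; exists 1; split => // s _; rewrite expr0 mulr1. Qed.

Lemma Ok_zero k : Ok k (fun _ => 0).
Proof. by exists 0; exists 1; split => // s _; rewrite normr0 mul0r. Qed.

Lemma Ok_id : Ok 1 (fun s => s).
Proof. by exists 1; exists 1; split => // s _; rewrite expr1 mul1r. Qed.

Lemma Ok_add k g h : Ok k g -> Ok k h -> Ok k (fun s => g s + h s).
Proof.
move=> [K1 H1] [K2 H2]; exists (K1 + K2); apply: near_impl (near_and H1 H2).
move=> s [a b]; apply: (le_trans (ler_normD _ _)).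
by rewrite mulrDl; apply: lerD.
Qed.

Lemma Ok_opp k g : Ok k g -> Ok k (fun s => - g s).
Proof. by move=> [K H]; exists K; apply: near_impl H => s; rewrite normrN. Qed.

Lemma Ok_sub k g h : Ok k g -> Ok k h -> Ok k (fun s => g s - h s).
Proof. by move=> a b; apply: Ok_add a (Ok_opp b). Qed.

Lemma Ok_mul k m g h : Ok k g -> Ok m h -> Ok (k + m) (fun s => g s * h s).
Proof.
move=> [K1 H1] [K2 H2]; exists (K1 * K2); apply: near_impl (near_and H1 H2).
move=> s [a b]; rewrite normrM exprD.
have -> : K1 * K2 * (`|s| ^+ k * `|s| ^+ m) = (K1 * `|s| ^+ k) * (K2 * `|s| ^+ m).
  by ring.
by apply: ler_pM.
Qed.

Lemma Ok_weaken k m g : (m <= k)%N -> Ok k g -> Ok m g.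
Proof.
move=> mk [K H]; exists `|K|; apply: near_impl (near_and H (near_small ltr01)).
move=> s [a b]; apply: (le_trans a).
have h1 : `|s| ^+ k <= `|s| ^+ m.
  by apply: ler_wiXn2l => //; apply: ltW.
apply: (le_trans (ler_norm _)); rewrite normrM normrX normr_id.
by apply: ler_wpM2l.
Qed.

Lemma Ok_scale k c g : Ok k g -> Ok k (fun s => c * g s).
Proof.
by move=> H; have := Ok_mul (Ok_const c) H; rewrite add0n.
Qed.

Lemma Ok_pow k : Ok k (fun s => s ^+ k).
Proof.
elim: k => [|k IH]; first by apply: Ok_extf (Ok_const 1) => s; rewrite expr0.
have := Ok_mul Ok_id IH; rewrite add1n; apply: Ok_extf => s; by rewrite exprS.
Qed.

Lemma Ok_sum k I (r : seq I) (P : pred I) (F : I -> R -> R) :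
  (forall i, Ok k (F i)) -> Ok k (fun s => \sum_(i <- r | P i) F i s).
Proof.
move=> H; elim: r => [|a r IH].
  by apply: Ok_extf (Ok_zero k) => s; rewrite big_nil.
case Pa: (P a).
  by apply: Ok_extf (Ok_add (H a) IH) => s; rewrite big_cons Pa.
by apply: Ok_extf IH => s; rewrite big_cons Pa.
Qed.

Lemma Ok_near k g c : Ok k.+1 g -> 0 < c -> Near (fun s => g s < c).
Proof.
move=> [K H] cp.
have Kp : 0 < `|K| + 1 by rewrite ltr_wpDl.
pose r := Num.min 1 (c / (`|K| + 1)).
have rp : 0 < r by rewrite /r lt_min ltr01 divr_gt0.
apply: near_impl (near_and H (near_small rp)) => s [a b].
move: b; rewrite /r lt_min => /andP [s1 s2].
apply: (le_lt_trans (ler_norm _)); apply: (le_lt_trans a).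
rewrite exprS.
have h0 : `|s| ^+ k <= 1 by apply: exprn_ile1 => //; apply: ltW.
have h2 : K * (`|s| * `|s| ^+ k) <= `|K| * `|s|.
  apply: (le_trans (ler_norm _)); rewrite !normrM normrX normr_id.
  apply: ler_wpM2l => //; rewrite -[X in _ <= X]mulr1; apply: ler_wpM2l => //.
apply: (le_lt_trans h2).
have : `|s| * (`|K| + 1) < c by rewrite -ltr_pdivlMr.
have : 0 <= `|s| by [].
nra.
Qed.

Lemma le0_small (x C r : R) : 0 < r -> (forall t, 0 < t -> t < r -> x <= C * t) -> x <= 0.
Proof.
move=> rp H; rewrite leNgt; apply/negP => xp.
have Cp : 0 < `|C| + 1 by rewrite ltr_wpDl.
pose t := Num.min (r / 2) (x / (`|C| + 1)).
have tp : 0 < t by rewrite /t lt_min !divr_gt0.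
have t1 : t <= r / 2 by rewrite /t ge_min lexx.
have t2 : t <= x / (`|C| + 1) by rewrite /t ge_min lexx orbT.
have tr : t < r by apply: (le_lt_trans t1); lra.
have := H t tp tr.
have h3 : C * t <= `|C| * t by apply: ler_wpM2r; [exact: ltW | exact: ler_norm].
have h4 : t * (`|C| + 1) <= x by rewrite -ler_pdivlMr.
have : 0 <= `|C| by [].
nra.
Qed.

Lemma second_order (g : R -> R) c0 c1 c2 :
  Ok 3 (fun s => g s - (c0 + s * c1 + s ^+ 2 * c2)) ->
  Near (fun s => g s <= c0) -> c1 = 0 /\ c2 <= 0.
Proof.
move=> [K HK] Hn.
have [r [rp Hr]] := near_and HK Hn.
pose r' := Num.min r 1.
have r'p : 0 < r' by rewrite /r' lt_min rp ltr01.
have key : forall t, 0 < t -> t < r' ->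
    t * c1 + t ^+ 2 * c2 <= K * t ^+ 3 /\ - t * c1 + t ^+ 2 * c2 <= K * t ^+ 3.
  move=> t tp; rewrite /r' lt_min => /andP [tr t1].
  have n1 : `|t| < r by rewrite gtr0_norm.
  have n2 : `|- t| < r by rewrite normrN gtr0_norm.
  have [a1 b1] := Hr t n1.
  have [a2 b2] := Hr (- t) n2.
  have nt : `|t| = t by rewrite gtr0_norm.
  have nnt : `|- t| = t by rewrite normrN gtr0_norm.
  rewrite nt in a1; rewrite nnt in a2.
  rewrite -normrN in a1; rewrite -normrN in a2.
  have e1 := le_trans (ler_norm _) a1.
  have e2 := le_trans (ler_norm _) a2.
  have sq : (- t) ^+ 2 = t ^+ 2 by rewrite sqrrN.
  rewrite sq in e2.
  by split; [move: e1 b1|move: e2 b2]; lra.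
have c2n : c2 <= 0.
  apply: (le0_small (C := `|K|) r'p) => t tp tr.
  have [k1 k2] := key t tp tr.
  have : t ^+ 3 = t ^+ 2 * t by rewrite exprS mulrC.
  have : 0 < t ^+ 2 by rewrite exprn_gt0.
  have : K <= `|K| by rewrite ler_norm.
  have : t < 1 by move: tr; rewrite /r' lt_min => /andP [].
  move=> h1 h2 h3 h4.
  have h5 : 2 * (t ^+ 2 * c2) <= 2 * (K * t ^+ 3) by lra.
  have h6 : c2 <= K * t.
    rewrite h4 in h5.
    have : t ^+ 2 * c2 <= t ^+ 2 * (K * t) by rewrite mulrCA; lra.
    by rewrite ler_pM2l.
  by apply: (le_trans h6); apply: ler_wpM2r; [exact: ltW|].
split => //.
have B : forall t, 0 < t -> t < r' -> `|c1| <= (`|K| + `|c2|) * t.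
  move=> t tp tr; have [k1 k2] := key t tp tr.
  have t1 : t < 1 by move: tr; rewrite /r' lt_min => /andP [].
  have h3 : t ^+ 3 = t * (t * t) by rewrite !exprS expr0 mulr1.
  have h2 : t ^+ 2 = t * t by rewrite expr2.
  rewrite h2 h3 in k1 k2.
  have hK : K <= `|K| by rewrite ler_norm.
  have hc : - c2 <= `|c2| by rewrite -normrN ler_norm.
  have hc2 : 0 <= `|c2| by [].
  have : t * `|c1| <= t * ((`|K| + `|c2|) * t).
    have : t * c1 <= t * ((`|K| + `|c2|) * t) /\ t * (- c1) <= t * ((`|K| + `|c2|) * t).
      have tt : 0 < t * t by apply: mulr_gt0.
      have a : K * (t * (t * t)) <= `|K| * (t * t).
        apply: (le_trans (y := `|K| * (t * (t * t)))).
          by apply: ler_wpM2r; [apply: ltW; apply: mulr_gt0|].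
        apply: ler_wpM2l => //; rewrite mulrC; apply: ler_piMr; [exact: ltW | exact: ltW].
      have b : - c2 * (t * t) <= `|c2| * (t * t).
        by apply: ler_wpM2r; [exact: ltW|].
      split; nra.
    case=> u v; case: (lerP 0 c1) => hc1.
      by rewrite ger0_norm.
    by rewrite ltr0_norm.
  by rewrite ler_pM2l.
have := le0_small r'p B; rewrite normr_le0 => /eqP //.
Qed.


End OkSec.

Section OkM.
Variable R : realType.
Local Notation "<< X , Y >>" := (frob_inner X Y).

Definition OkM k m q (G : R -> 'M[R]_(m,q)) := forall i j, Ok k (fun s => G s i j).

Lemma Ok_inner k1 k2 m q (G H : R -> 'M[R]_(m,q)) :
  OkM k1 G -> OkM k2 H -> Ok (k1 + k2) (fun s => << G s, H s >>).
Proof.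
move=> HG HH; apply: Ok_extf (fun s => innerE (G s) (H s)) _.
apply: Ok_sum => i; apply: Ok_sum => j; exact: Ok_mul.
Qed.

Lemma OkM_scale k m q g (Z : 'M[R]_(m,q)) : Ok k g -> OkM k (fun s => g s *: Z).
Proof.
move=> H i j; apply: Ok_extf (Ok_scale (Z i j) H) => s.
by rewrite mxE mulrC.
Qed.

Lemma OkM_add k m q (G H : R -> 'M[R]_(m,q)) : OkM k G -> OkM k H -> OkM k (fun s => G s + H s).
Proof. move=> a b i j; apply: Ok_extf (Ok_add (a i j) (b i j)) => s; by rewrite mxE. Qed.

Lemma OkM_const m q (Z : 'M[R]_(m,q)) : OkM 0 (fun _ => Z).
Proof. by move=> i j; exact: Ok_const. Qed.

Lemma OkM_weaken k k' m q (G : R -> 'M[R]_(m,q)) : (k' <= k)%N -> OkM k G -> OkM k' G.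
Proof. move=> h H i j; apply: (Ok_weaken h); exact: H. Qed.

Lemma Ok_pow0 k : Ok 0 (fun s : R => s ^+ k).
Proof. exact: (Ok_weaken (leq0n k) (@Ok_pow R k)). Qed.

Lemma inner_expand m q (S X Y S' X' Y' : 'M[R]_(m,q)) (E E' T T' : R -> 'M[R]_(m,q)) :
  (forall s, T s = S + s *: X + s ^+ 2 *: Y + E s) ->
  (forall s, T' s = S' + s *: X' + s ^+ 2 *: Y' + E' s) ->
  OkM 3 E -> OkM 3 E' ->
  Ok 3 (fun s => << T s, T' s >> - (<< S, S' >> + s * (<< X, S' >> + << S, X' >>)
        + s ^+ 2 * (<< Y, S' >> + << X, X' >> + << S, Y' >>))).
Proof.
move=> HT HT' HE HE'.
pose P s := S + s *: X + s ^+ 2 *: Y.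
pose P' s := S' + s *: X' + s ^+ 2 *: Y'.
have HP : OkM 0 P.
  apply: OkM_add; [apply: OkM_add|].
  - exact: OkM_const.
  - exact: OkM_scale (Ok_pow0 1).
  - exact: OkM_scale (Ok_pow0 2).
have HP' : OkM 0 P'.
  apply: OkM_add; [apply: OkM_add|].
  - exact: OkM_const.
  - exact: OkM_scale (Ok_pow0 1).
  - exact: OkM_scale (Ok_pow0 2).
have main : forall s, << T s, T' s >> - (<< S, S' >> + s * (<< X, S' >> + << S, X' >>)
        + s ^+ 2 * (<< Y, S' >> + << X, X' >> + << S, Y' >>)) =
   (s ^+ 3 * (<< X, Y' >> + << Y, X' >>) + s ^+ 4 * << Y, Y' >>)
   + << P s, E' s >> + << E s, P' s >> + << E s, E' s >>.
  move=> s; rewrite HT HT' /P /P'.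
  rewrite !(innerDl, innerDr, innerZl, innerZr).
  ring.
apply: Ok_extf main _.
apply: Ok_add; [apply: Ok_add; [apply: Ok_add|]|].
- apply: Ok_add.
    by apply: Ok_extf (Ok_scale (<< X, Y' >> + << Y, X' >>) (@Ok_pow R 3)) => s; rewrite mulrC.
  apply: (Ok_weaken (k := 4)) => //.
  by apply: Ok_extf (Ok_scale (<< Y, Y' >>) (@Ok_pow R 4)) => s; rewrite mulrC.
- exact: Ok_inner HP HE'.
- by have := Ok_inner HE HP'; rewrite addn0.
- exact: Ok_weaken (Ok_inner HE HE').
Qed.

End OkM.

Section Cayley.
Variable R : realType.
Local Notation "<< X , Y >>" := (frob_inner X Y).

Definition dd (lam s : R) := (1 + s ^+ 2 * lam / 4)^-1.
Definition Qc n (A : 'M[R]_n) (lam s : R) : 'M[R]_n :=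
  1%:M + (s * dd lam s) *: A + (s ^+ 2 / 2 * dd lam s) *: (A *m A).

Lemma Qc_orth n (A : 'M[R]_n) lam s :
  A^T = - A -> A *m A *m A = - lam *: A -> 1 + s ^+ 2 * lam / 4 != 0 ->
  (Qc A lam s)^T *m Qc A lam s = 1%:M.
Proof.
move=> skA cubA nz.
rewrite /Qc.
set a := s * dd lam s; set b := s ^+ 2 / 2 * dd lam s.
have tr : (1%:M + a *: A + b *: (A *m A))^T = 1%:M - a *: A + b *: (A *m A).
  rewrite !linearD !linearZ /= trmx1 trmx_mul skA mulmxN mulNmx opprK.
  by rewrite scalerN.
rewrite tr.
rewrite !(mulmxDl, mulmxDr, mulmxBl, mulmxBr, mul1mx, mulmx1).
rewrite ?(mulNmx, mulmxN).
rewrite -?(scalemxAl, scalemxAr) ?mulmxA cubA.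
rewrite -?scalemxAl.
have hd : dd lam s * (1 + s ^+ 2 * lam / 4) = 1 by rewrite mulVf.
move: (A *m A) => AA.
apply/matrixP => i j; rewrite !mxE.
rewrite /a /b /dd.
have nz4 : 4 + s ^+ 2 * lam != 0.
  apply: contra nz => /eqP h; apply/eqP.
  have -> : 1 + s ^+ 2 * lam / 4 = (4 + s ^+ 2 * lam) / 4 by field.
  by rewrite h mul0r.
by field.
Qed.


Lemma near_den (lam : R) : Near (fun s : R => 1/2 <= 1 + s ^+ 2 * lam / 4).
Proof.
have hp : 0 < `|lam| + 1 by rewrite ltr_wpDl.
pose r := Num.min 1 ((`|lam| + 1)^-1).
have rp : 0 < r by rewrite /r lt_min ltr01 invr_gt0.
exists r; split => // s; rewrite /r lt_min => /andP [s1 s2].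
have e : s ^+ 2 = `|s| * `|s| by rewrite -expr2 real_normK ?num_real.
have h1 : s ^+ 2 <= `|s|.
  rewrite e -[X in _ <= X]mulr1; apply: ler_wpM2l => //; exact: ltW.
have h2 : `|s| * (`|lam| + 1) < 1 by rewrite -ltr_pdivlMr // div1r.
have h3 : - lam <= `|lam| by rewrite -normrN ler_norm.
have h4 : 0 <= s ^+ 2 by rewrite sqr_ge0.
have h5 : 0 <= `|s| by [].
nra.
Qed.

Lemma near_nz (lam : R) : Near (fun s : R => 1 + s ^+ 2 * lam / 4 != 0).
Proof.
apply: near_impl (near_den lam) => s h; apply/eqP => e; rewrite e in h; lra.
Qed.

Lemma Ok_dd (lam : R) : Ok 0 (dd lam).
Proof.
exists 2; apply: near_impl (near_den lam) => s h.
rewrite expr0 mulr1 /dd.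
have p : 0 < 1 + s ^+ 2 * lam / 4 by lra.
rewrite gtr0_norm ?invr_gt0 //.
have e : (1 + s ^+ 2 * lam / 4)^-1 * (1 + s ^+ 2 * lam / 4) = 1 by rewrite mulVf ?gt_eqF.
have ip : 0 < (1 + s ^+ 2 * lam / 4)^-1 by rewrite invr_gt0.
move: e ip h; set x := 1 + _; set y := x^-1; nra.
Qed.

Definition Ec n q (A : 'M[R]_n) (lam : R) (S : 'M[R]_(n,q)) (s : R) : 'M[R]_(n,q) :=
  (s * dd lam s - s) *: (A *m S) + (s ^+ 2 / 2 * dd lam s - s ^+ 2 / 2) *: (A *m A *m S).

Lemma Qc_expand n q (A : 'M[R]_n) lam (S : 'M[R]_(n,q)) s :
  Qc A lam s *m S = S + s *: (A *m S) + s ^+ 2 *: ((1/2) *: (A *m A *m S)) + Ec A lam S s.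
Proof.
rewrite /Qc /Ec !mulmxDl mul1mx -!scalemxAl.
move: (A *m S) (A *m A *m S) => X Y.
apply/matrixP => i j; rewrite !mxE; ring.
Qed.

Lemma Ec_ok n q (A : 'M[R]_n) lam (S : 'M[R]_(n,q)) : OkM 3 (Ec A lam S).
Proof.
have k1 : Ok 3 (fun s => s * dd lam s - s).
  apply: (Ok_ext (h := fun s => s ^+ 3 * (- (lam / 4) * dd lam s))).
    apply: near_impl (near_nz lam) => s nz; rewrite /dd; field.
    have nz4 : 4 + s ^+ 2 * lam != 0.
      apply: contra nz => /eqP h; apply/eqP.
      have -> : 1 + s ^+ 2 * lam / 4 = (4 + s ^+ 2 * lam) / 4 by field.
      by rewrite h mul0r.
    done.
  have := Ok_mul (@Ok_pow R 3) (Ok_scale (- (lam / 4)) (Ok_dd lam)); by rewrite addn0.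
have k2 : Ok 3 (fun s => s ^+ 2 / 2 * dd lam s - s ^+ 2 / 2).
  apply: (Ok_ext (h := fun s => s ^+ 3 * (s * (- (lam / 8) * dd lam s)))).
    apply: near_impl (near_nz lam) => s nz; rewrite /dd; field.
    have nz4 : 4 + s ^+ 2 * lam != 0.
      apply: contra nz => /eqP h; apply/eqP.
      have -> : 1 + s ^+ 2 * lam / 4 = (4 + s ^+ 2 * lam) / 4 by field.
      by rewrite h mul0r.
    done.
  apply: (Ok_weaken (k := 4)) => //.
  have := Ok_mul (@Ok_pow R 3) (Ok_mul (@Ok_id R) (Ok_scale (- (lam / 8)) (Ok_dd lam))).
  by rewrite addn0.
by apply: OkM_add; apply: OkM_scale.
Qed.

Lemma Qc_stiefel n q (A : 'M[R]_n) lam (S : 'M[R]_(n,q)) s :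
  A^T = - A -> A *m A *m A = - lam *: A -> 1 + s ^+ 2 * lam / 4 != 0 ->
  stiefel S -> stiefel (Qc A lam s *m S).
Proof.
move=> h1 h2 h3 hS; rewrite /stiefel trmx_mul mulmxA -(mulmxA S^T) Qc_orth //.
by rewrite mulmx1.
Qed.

End Cayley.

Section Master.
Variable R : realType.
Local Notation "<< X , Y >>" := (frob_inner X Y).

Lemma sum_swap N (P : 'I_N -> 'I_N -> bool) (f : 'I_N -> 'I_N -> R) :
  \sum_(u < N) \sum_(v < N | P u v) f u v = \sum_(v < N) \sum_(u < N | P u v) f u v.
Proof.
under eq_bigr do rewrite big_mkcond.
rewrite exchange_big; apply: eq_bigr => v _; by rewrite [RHS]big_mkcond.
Qed.

Lemma half_sum N (e : rel 'I_N) (g : 'I_N -> 'I_N -> R) :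
  simple_graph e -> (forall u v, g u v = g v u) ->
  \sum_(u < N) \sum_(v < N | e u v) g u v =
  2 * \sum_(u < N) \sum_(v < N | (u < v)%N && e u v) g u v.
Proof.
move=> [esym eirr] gs.
have sp : forall u, \sum_(v < N | e u v) g u v =
   \sum_(v < N | (u < v)%N && e u v) g u v + \sum_(v < N | (v < u)%N && e u v) g u v.
  move=> u; rewrite (bigID (fun v : 'I_N => (u < v)%N)) /=; congr (_ + _).
    by apply: eq_bigl => v; rewrite andbC.
  apply: eq_bigl => v; rewrite andbC.
  case: (ltngtP u v) => h /=; rewrite ?andbF ?andbT //.
  have -> : v = u by apply: val_inj.
  by rewrite (negbTE (eirr u)).
under eq_bigr do rewrite sp.
rewrite big_split /= [X in _ + X]sum_swap.
have -> : \sum_(v < N) \sum_(u < N | (v < u)%N && e u v) g u v =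
          \sum_(u < N) \sum_(v < N | (u < v)%N && e u v) g u v.
  apply: eq_bigr => v _; apply: eq_big => u; first by rewrite esym.
  by move=> _; rewrite gs.
by rewrite mulr2n mulrDl mul1r.
Qed.

Lemma sum_lin I (r : seq I) (P : pred I) (a b c d : I -> R) (s t : R) :
  \sum_(i <- r | P i) (a i - (b i + s * c i + t * d i)) =
  \sum_(i <- r | P i) a i - (\sum_(i <- r | P i) b i + s * \sum_(i <- r | P i) c i
     + t * \sum_(i <- r | P i) d i).
Proof. by rewrite sumrB !big_split /= !mulr_sumr. Qed.


Definition Fs N n p (e : rel 'I_N) (T : 'I_N -> 'M[R]_(n,p)) :=
  \sum_(u < N) \sum_(v < N | e u v) << T u, T v >>.

Lemma potential_F N n p (e : rel 'I_N) (T : 'I_N -> 'M[R]_(n,p)) :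
  simple_graph e ->
  potential e T = \sum_(u < N) \sum_(v < N | (u < v)%N && e u v) (p%:R : R) - Fs e T / 2.
Proof.
move=> sg; rewrite /potential.
under eq_bigr do rewrite sumrB.
rewrite sumrB; congr (_ - _).
rewrite /Fs half_sum //; last by move=> u v; exact: innerC.
by field.
Qed.

Lemma OkM_extf k m q (G H : R -> 'M[R]_(m,q)) : (forall s, G s = H s) -> OkM k H -> OkM k G.
Proof. by move=> E HH i j; apply: Ok_extf (HH i j) => s; rewrite E. Qed.

Lemma master N n p (e : rel 'I_N) (S : 'I_N -> 'M[R]_(n,p)) (A : 'I_N -> 'M[R]_n)
  (lam : 'I_N -> R) :
  simple_graph e -> local_minimizer e S ->
  (forall u, (A u)^T = - A u) -> (forall u, A u *m A u *m A u = - lam u *: A u) ->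
  let X u := A u *m S u in let Y u := (1/2) *: (A u *m A u *m S u) in
  \sum_(u < N) \sum_(v < N | e u v) (<< X u, S v >> + << S u, X v >>) = 0 /\
  \sum_(u < N) \sum_(v < N | e u v) (<< Y u, S v >> + << X u, X v >> + << S u, Y v >>) <= 0.
Proof.
move=> sg [hS [eps [epsp Hloc]]] skA cubA X Y.
pose T s u := Qc (A u) (lam u) s *m S u.
have HT : forall u s, T s u = S u + s *: X u + s ^+ 2 *: Y u + Ec (A u) (lam u) (S u) s.
  by move=> u s; exact: Qc_expand.
apply: (second_order (g := fun s => Fs e (T s)) (c0 := Fs e S)).
- apply: (Ok_extf (h := fun s => \sum_(u < N) \sum_(v < N | e u v)
     (<< T s u, T s v >> - (<< S u, S v >> + s * (<< X u, S v >> + << S u, X v >>)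
        + s ^+ 2 * (<< Y u, S v >> + << X u, X v >> + << S u, Y v >>))))).
    move=> s; under [RHS]eq_bigr do rewrite sum_lin.
    by rewrite sum_lin.
  apply: Ok_sum => u; apply: Ok_sum => v.
  exact: inner_expand (HT u) (HT v) (Ec_ok _ _ _) (Ec_ok _ _ _).
have N1 : Near (fun s => forall u, 1 + s ^+ 2 * lam u / 4 != 0).
  exact: near_all (fun u => near_nz (lam u)).
have N2 : Near (fun s => \sum_(u < N) frob_norm2 (T s u - S u) < eps).
  apply: (Ok_near (k := 1)) epsp.
  apply: Ok_sum => u; rewrite /frob_norm2.
  have HM : OkM 1 (fun s => T s u - S u).
    apply: (OkM_extf (H := fun s => s *: X u + s ^+ 2 *: Y u + Ec (A u) (lam u) (S u) s)).
      by move=> s; rewrite HT addrC -!addrA addKr !addrA.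
    apply: OkM_add; [apply: OkM_add|].
    - exact: OkM_scale (@Ok_pow R 1).
    - exact: OkM_scale (Ok_weaken (leqnSn 1) (@Ok_pow R 2)).
    - exact: OkM_weaken (Ec_ok _ _ _).
  exact: (Ok_inner HM HM).
apply: near_impl (near_and N1 N2) => s [h1 h2].
have st : on_stiefel_N (T s) by move=> u; apply: Qc_stiefel.
have := Hloc (T s) st h2; rewrite !potential_F //.
lra.
Qed.

End Master.

Section Rank2.
Variable R : realType.
Local Notation "<< X , Y >>" := (frob_inner X Y).

Definition sk n (x y : 'cV[R]_n) : 'M[R]_n := x *m y^T - y *m x^T.

Lemma trmul_cv n (v w : 'cV[R]_n) : v^T *m w = (<< v, w >>)%:M.
Proof. by rewrite {1}[v^T *m w]mx11_scalar /frob_inner trace_mx11. Qed.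

Lemma outer_mul n (u v w : 'cV[R]_n) : u *m v^T *m w = << v, w >> *: u.
Proof. by rewrite -mulmxA trmul_cv mul_mx_scalar. Qed.

Lemma sk_skew n (x y : 'cV[R]_n) : (sk x y)^T = - sk x y.
Proof.
by rewrite /sk linearB /= !trmx_mul !trmxK opprB.
Qed.

Lemma sk_cube n (x y : 'cV[R]_n) :
  sk x y *m sk x y *m sk x y =
  - (<< x, x >> * << y, y >> - << x, y >> ^+ 2) *: sk x y.
Proof.
set A := sk x y.
have hx : A *m x = << y, x >> *: x - << x, x >> *: y.
  by rewrite /A /sk mulmxBl !outer_mul.
have hy : A *m y = << y, y >> *: x - << x, y >> *: y.
  by rewrite /A /sk mulmxBl !outer_mul.
have e2 : A *m A = A *m x *m y^T - A *m y *m x^T.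
  by rewrite {2}/A /sk mulmxBr !mulmxA.
rewrite (innerC y x) in hx.
have hAx : A *m (A *m x) = (<< x, y >> ^+ 2 - << x, x >> * << y, y >>) *: x.
  rewrite hx mulmxBr -!scalemxAr hx hy.
  apply/matrixP => i j; rewrite !mxE; ring.
have hAy : A *m (A *m y) = (<< x, y >> ^+ 2 - << x, x >> * << y, y >>) *: y.
  rewrite hy mulmxBr -!scalemxAr hx hy.
  apply/matrixP => i j; rewrite !mxE; ring.
have e3 : A *m (A *m x *m y^T) = (A *m (A *m x)) *m y^T by rewrite mulmxA.
have e4 : A *m (A *m y *m x^T) = (A *m (A *m y)) *m x^T by rewrite mulmxA.
rewrite -mulmxA e2 mulmxBr e3 e4 hAx hAy -!scalemxAl.
rewrite /A /sk scalerBr.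
apply/matrixP => i j; rewrite !mxE; ring.
Qed.

End Rank2.

Section First.
Variable R : realType.
Local Notation "<< X , Y >>" := (frob_inner X Y).

Lemma inner_delta m q (a : 'I_m) (b : 'I_q) (Z : 'M[R]_(m,q)) :
  << delta_mx a b, Z >> = Z a b.
Proof.
rewrite innerE (bigD1 a) //= (bigD1 b) //= !mxE !eqxx /= mul1r.
rewrite big1 ?addr0; last by move=> j jb; rewrite mxE eqxx (negbTE jb) /= mul0r.
rewrite big1 ?addr0 // => i ia; rewrite big1 // => j _.
by rewrite mxE (negbTE ia) /= mul0r.
Qed.

Lemma delta_sk n (a b : 'I_n) :
  sk (delta_mx a 0) (delta_mx b 0) = delta_mx a b - delta_mx b a :> 'M[R]_n.
Proof. by rewrite /sk !trmx_delta !mul_delta_mx. Qed.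

Definition nbr N n p (e : rel 'I_N) (S : 'I_N -> 'M[R]_(n,p)) i :=
  \sum_(v < N | e i v) S v.

Lemma sum_single N (e : rel 'I_N) i (f : 'I_N -> 'I_N -> R) :
  (forall u v, u != i -> f u v = 0) ->
  \sum_(u < N) \sum_(v < N | e u v) f u v = \sum_(v < N | e i v) f i v.
Proof.
move=> H; rewrite (bigD1 i) //= [X in _ + X]big1 ?addr0 // => u ui.
by rewrite big1 // => v _; apply: H.
Qed.


Lemma first_order N n p (e : rel 'I_N) (S : 'I_N -> 'M[R]_(n,p)) i :
  simple_graph e -> local_minimizer e S ->
  (nbr e S i *m (S i)^T)^T = nbr e S i *m (S i)^T.
Proof.
move=> sg lm.
set G := nbr e S i; set Z := G *m (S i)^T.
have key : forall a b : 'I_n, Z a b = Z b a.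
  move=> a b.
  pose x : 'cV[R]_n := delta_mx a 0.
  pose y : 'cV[R]_n := delta_mx b 0.
  pose E := sk x y.
  pose lamE := << x, x >> * << y, y >> - << x, y >> ^+ 2.
  pose A u := if u == i then E else 0.
  pose lam u := if u == i then lamE else 0.
  have skA : forall u, (A u)^T = - A u.
    by move=> u; rewrite /A; case: (u == i); [exact: sk_skew| rewrite trmx0 oppr0].
  have cubA : forall u, A u *m A u *m A u = - lam u *: A u.
    move=> u; rewrite /A /lam; case: (u == i); first exact: sk_cube.
    by rewrite !mul0mx scaler0.
  have [c1 _] := master sg lm skA cubA.
  have hX : forall u, A u *m S u = if u == i then E *m S i else 0.
    by move=> u; rewrite /A; case: eqP => [->|_] //; rewrite mul0mx.
  have s1 : \sum_(u < N) \sum_(v < N | e u v) << A u *m S u, S v >> = << E *m S i, G >>.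
    rewrite (@sum_single N e i); last by move=> u v ui; rewrite hX (negbTE ui) inner0l.
    by rewrite hX eqxx /G /nbr inner_sumr.
  have s2 : \sum_(u < N) \sum_(v < N | e u v) << S u, A v *m S v >> = << E *m S i, G >>.
    rewrite sum_swap.
    apply: etrans (@sum_single N (fun v u => e u v) i (fun v u => << S u, A v *m S v >>) _) _.
      by move=> u v ui; rewrite hX (negbTE ui) inner0r.
    rewrite /G /nbr inner_sumr; apply: eq_big => v; first by case: sg => -> _.
    by move=> _; rewrite hX eqxx innerC.
  move: c1; rewrite (eq_bigr (fun u => \sum_(v < N | e u v) << A u *m S u, S v >> +
            \sum_(v < N | e u v) << S u, A v *m S v >>)); last by move=> u _; rewrite big_split.
  rewrite big_split /= s1 s2 inner_mulr -/Z /E /x /y delta_sk innerBl !inner_delta.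
  move/eqP; rewrite -mulr2n mulrn_eq0 /= subr_eq0 => /eqP.
  done.
by apply/matrixP => a b; rewrite mxE key.
Qed.

End First.

Section Avg.
Variable R : realType.
Local Notation "<< X , Y >>" := (frob_inner X Y).

Lemma AWB m n p q (A : 'M[R]_(m,n)) (B : 'M[R]_(p,q)) k l :
  A *m delta_mx k l *m B = col k A *m row l B.
Proof.
by rewrite -(mul_delta_mx (0 : 'I_1)) colE rowE !mulmxA.
Qed.

Lemma outer_inner m q (x x' : 'M[R]_(m,1)) (y y' : 'M[R]_(1,q)) :
  << x *m y, x' *m y' >> = << x, x' >> * << y, y' >>.
Proof.
rewrite inner_mull mulmxA.
have -> : x^T *m x' = (<< x, x' >>)%:M.
  by rewrite {1}[x^T *m x']mx11_scalar /frob_inner trace_mx11.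
by rewrite mul_scalar_mx innerZr.
Qed.

Lemma col_inner m n1 n2 (A : 'M[R]_(m,n1)) (C : 'M[R]_(m,n2)) k l : << col k A, col l C >> = (A^T *m C) k l.
Proof.
rewrite innerE !mxE; apply: eq_bigr => i _; by rewrite big_ord1 !mxE.
Qed.

Lemma row_inner m1 m2 n (B : 'M[R]_(m1,n)) (D : 'M[R]_(m2,n)) k l : << row k B, row l D >> = (B *m D^T) k l.
Proof.
rewrite innerE big_ord1 !mxE; apply: eq_bigr => i _; by rewrite !mxE.
Qed.

Lemma sumAA m n p q (A C : 'M[R]_(m,n)) (B D : 'M[R]_(p,q)) :
  \sum_(k < n) \sum_(l < p) << A *m delta_mx k l *m B, C *m delta_mx k l *m D >> =
  << A, C >> * << B, D >>.
Proof.
under eq_bigr do under eq_bigr do rewrite !AWB outer_inner col_inner row_inner.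
rewrite /frob_inner {2}/mxtrace big_distrl /=.
under eq_bigr do rewrite -mulr_sumr.
rewrite /mxtrace; apply: eq_bigr => k _; congr (_ * _).
change (\tr (B *m D^T) = \tr (B^T *m D)).
by rewrite mxtrace_mulC -mxtrace_tr trmx_mul trmxK.
Qed.


Lemma sumAB m n p q (A : 'M[R]_(m,n)) (B : 'M[R]_(p,q)) (C : 'M[R]_(m,p)) (D : 'M[R]_(n,q)) :
  \sum_(k < n) \sum_(l < p) << A *m delta_mx k l *m B, C *m (delta_mx k l)^T *m D >> =
  \tr (A^T *m C *m (B *m D^T)).
Proof.
under eq_bigr do under eq_bigr do rewrite trmx_delta !AWB outer_inner col_inner row_inner.
rewrite /mxtrace; apply: eq_bigr => k _; rewrite mxE; by apply: eq_bigr.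
Qed.

Lemma sumBA m n p q (A : 'M[R]_(m,n)) (B : 'M[R]_(p,q)) (C : 'M[R]_(m,p)) (D : 'M[R]_(n,q)) :
  \sum_(k < n) \sum_(l < p) << C *m (delta_mx k l)^T *m D, A *m delta_mx k l *m B >> =
  \tr (A^T *m C *m (B *m D^T)).
Proof. rewrite -sumAB; apply: eq_bigr => k _; apply: eq_bigr => l _; exact: innerC. Qed.

Lemma sumBB m n p q (A C : 'M[R]_(m,p)) (B D : 'M[R]_(n,q)) :
  \sum_(k < n) \sum_(l < p) << A *m (delta_mx k l)^T *m B, C *m (delta_mx k l)^T *m D >> =
  << A, C >> * << B, D >>.
Proof.
rewrite exchange_big /= -sumAA; apply: eq_bigr => l _; apply: eq_bigr => k _.
by rewrite !trmx_delta.
Qed.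

Definition Pi n p (S W : 'M[R]_(n,p)) : 'M[R]_(n,p) :=
  W - (1/2) *: (S *m (S^T *m W)) - (1/2) *: (S *m (W^T *m S)).

Lemma sumkl_add n p (f g : 'I_n -> 'I_p -> R) :
  \sum_(k < n) \sum_(l < p) (f k l + g k l) =
  \sum_(k < n) \sum_(l < p) f k l + \sum_(k < n) \sum_(l < p) g k l.
Proof. rewrite -big_split /=; apply: eq_bigr => k _; by rewrite big_split. Qed.

Lemma sumkl_scale n p c (f : 'I_n -> 'I_p -> R) :
  \sum_(k < n) \sum_(l < p) (c * f k l) = c * \sum_(k < n) \sum_(l < p) f k l.
Proof. rewrite mulr_sumr; apply: eq_bigr => k _; by rewrite mulr_sumr. Qed.

Lemma J_expand n p (S T : 'M[R]_(n,p)) (L : 'M[R]_p) :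
  \sum_(k < n) \sum_(l < p) << Pi S (delta_mx k l), Pi T (delta_mx k l) *m L >> =
  << (1%:M : 'M[R]_n), 1%:M >> * << (1%:M : 'M[R]_p), L >>
  - 1/2 * (<< 1%:M, T *m T^T >> * << (1%:M : 'M[R]_p), L >>)
  - 1/2 * \tr ((1%:M : 'M[R]_n)^T *m T *m ((1%:M : 'M[R]_p) *m (T *m L)^T))
  - 1/2 * (<< S *m S^T, 1%:M >> * << (1%:M : 'M[R]_p), L >>)
  + 1/4 * (<< S *m S^T, T *m T^T >> * << (1%:M : 'M[R]_p), L >>)
  + 1/4 * \tr ((S *m S^T)^T *m T *m ((1%:M : 'M[R]_p) *m (T *m L)^T))
  - 1/2 * \tr ((1%:M : 'M[R]_n)^T *m S *m (L *m S^T))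
  + 1/4 * \tr ((T *m T^T)^T *m S *m (L *m S^T))
  + 1/4 * (<< S, T >> * << S, T *m L >>).
Proof.
have e1 : forall W : 'M[R]_(n,p), Pi S W =
   1%:M *m W *m 1%:M - (1/2) *: (S *m S^T *m W *m 1%:M) - (1/2) *: (S *m W^T *m S).
  by move=> W; rewrite /Pi !mulmx1 mul1mx !mulmxA.
have e2 : forall W : 'M[R]_(n,p), Pi T W *m L =
   1%:M *m W *m L - (1/2) *: (T *m T^T *m W *m L) - (1/2) *: (T *m W^T *m (T *m L)).
  by move=> W; rewrite /Pi mul1mx !mulmxBl -!scalemxAl !mulmxA.
have pt : forall k l, << Pi S (delta_mx k l), Pi T (delta_mx k l) *m L >> =
  << 1%:M *m delta_mx k l *m 1%:M, 1%:M *m delta_mx k l *m L >>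
  + (-1/2) * << 1%:M *m delta_mx k l *m 1%:M, T *m T^T *m delta_mx k l *m L >>
  + (-1/2) * << 1%:M *m delta_mx k l *m 1%:M, T *m (delta_mx k l)^T *m (T *m L) >>
  + (-1/2) * << S *m S^T *m delta_mx k l *m 1%:M, 1%:M *m delta_mx k l *m L >>
  + 1/4 * << S *m S^T *m delta_mx k l *m 1%:M, T *m T^T *m delta_mx k l *m L >>
  + 1/4 * << S *m S^T *m delta_mx k l *m 1%:M, T *m (delta_mx k l)^T *m (T *m L) >>
  + (-1/2) * << S *m (delta_mx k l)^T *m S, 1%:M *m delta_mx k l *m L >>
  + 1/4 * << S *m (delta_mx k l)^T *m S, T *m T^T *m delta_mx k l *m L >>
  + 1/4 * << S *m (delta_mx k l)^T *m S, T *m (delta_mx k l)^T *m (T *m L) >>.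
  move=> k l; rewrite e1 e2.
  rewrite !(innerBl, innerBr, innerZl, innerZr).
  lra.
under eq_bigr do under eq_bigr do rewrite pt.
rewrite !sumkl_add !sumkl_scale.
rewrite !sumAA !sumAB !sumBA sumBB.
ring.
Qed.


Lemma inner11 m : << (1%:M : 'M[R]_m), 1%:M >> = m%:R.
Proof. by rewrite /frob_inner trmx1 mulmx1 mxtrace1. Qed.

Lemma inner1L m (L : 'M[R]_m) : << 1%:M, L >> = \tr L.
Proof. by rewrite /frob_inner trmx1 mul1mx. Qed.

Lemma tr_SSt n p (S : 'M[R]_(n,p)) : stiefel S -> \tr (S *m S^T) = p%:R.
Proof. by move=> hS; rewrite mxtrace_mulC hS mxtrace1. Qed.

Lemma I1 n p (S T : 'M[R]_(n,p)) : stiefel S -> stiefel T ->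
  \sum_(k < n) \sum_(l < p) << Pi S (delta_mx k l), Pi T (delta_mx k l) >> =
  p%:R * (n%:R - p%:R - 1) + (p%:R + 2) / 4 * << S^T *m T, S^T *m T >>
  + 1/4 * << S, T >> ^+ 2.
Proof.
move=> hS hT.
have -> : \sum_(k < n) \sum_(l < p) << Pi S (delta_mx k l), Pi T (delta_mx k l) >> =
  \sum_(k < n) \sum_(l < p) << Pi S (delta_mx k l), Pi T (delta_mx k l) *m 1%:M >>.
  by apply: eq_bigr => k _; apply: eq_bigr => l _; rewrite mulmx1.
rewrite J_expand.
have m2a : \tr (S *m S^T *m (T *m T^T)) = << S^T *m T, S^T *m T >>.
  by rewrite /frob_inner trmx_mul trmxK mulmxA mxtrace_mulC !mulmxA.
have m2b : \tr (T *m T^T *m (S *m S^T)) = << S^T *m T, S^T *m T >>.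
  by rewrite -m2a mxtrace_mulC.
rewrite !inner11 !inner1L !trmx1 !mul1mx !mulmx1 (innerC (S *m S^T)) inner1L.
rewrite !trmx_mul !trmxK (tr_SSt hT) (tr_SSt hS) ?mulmxA.
have c : \tr (T^T *m S *m S^T *m T) = << S^T *m T, S^T *m T >>.
  by rewrite /frob_inner trmx_mul trmxK !mulmxA.
have a1 : \tr (S *m S^T *m T *m T^T) = \tr (T^T *m S *m S^T *m T).
  by rewrite mxtrace_mulC !mulmxA.
have a2 : \tr (T *m T^T *m S *m S^T) = \tr (T^T *m S *m S^T *m T).
  by rewrite -!mulmxA mxtrace_mulC !mulmxA.
have a0 : << S *m S^T, T *m T^T >> = \tr (S *m S^T *m T *m T^T).
  by rewrite /frob_inner trmx_mul trmxK !mulmxA.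
rewrite a0 a1 a2 c.
by field.
Qed.

Lemma I2 n p (S : 'M[R]_(n,p)) (L : 'M[R]_p) : stiefel S ->
  \sum_(k < n) \sum_(l < p) << Pi S (delta_mx k l), Pi S (delta_mx k l) *m L >> =
  (n%:R - (p%:R + 1) / 2) * \tr L.
Proof.
move=> hS.
rewrite J_expand.
rewrite !inner11 !inner1L ?trmx1 ?mul1mx ?mulmx1 (innerC (S *m S^T)) inner1L.
rewrite !trmx_mul !trmxK (tr_SSt hS) ?mulmxA.
have e : S *m S^T *m S = S by rewrite -mulmxA hS mulmx1.
have t : forall M : 'M[R]_p, \tr (S *m M *m S^T) = \tr M.
  by move=> M; rewrite mxtrace_mulC mulmxA hS mul1mx.
have i1 : << S *m S^T, S *m S^T >> = p%:R.
  by rewrite /frob_inner trmx_mul trmxK !mulmxA e tr_SSt.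
have i2 : << S, S >> = p%:R by rewrite /frob_inner hS mxtrace1.
have i3 : << S, S *m L >> = \tr L by rewrite /frob_inner mulmxA hS mul1mx.
rewrite e !t i1 i2 i3 mxtrace_tr.
by field.
Qed.


End Avg.

Section Fin.
Variable R : realType.
Local Notation "<< X , Y >>" := (frob_inner X Y).

Definition xv n p (S : 'M[R]_(n,p)) (k : 'I_n) : 'cV[R]_n :=
  (1%:M - (1/2) *: (S *m S^T)) *m delta_mx k 0.
Definition yv n p (S : 'M[R]_(n,p)) (l : 'I_p) : 'cV[R]_n := S *m delta_mx l 0.

Lemma sk_Pi n p (S : 'M[R]_(n,p)) k l : stiefel S ->
  sk (xv S k) (yv S l) *m S = Pi S (delta_mx k l).
Proof.
move=> hS.
have hy : (yv S l)^T *m S = delta_mx 0 l.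
  by rewrite /yv trmx_mul -mulmxA hS mulmx1 trmx_delta.
have hx : (xv S k)^T *m S = (1/2) *: (delta_mx 0 k *m S).
  rewrite /xv trmx_mul trmx_delta linearB /= trmx1 linearZ /= trmx_mul trmxK.
  rewrite -mulmxA mulmxBl mul1mx -scalemxAl -mulmxA hS mulmx1.
  have -> : S - (1/2) *: S = (1/2) *: S.
    by apply/matrixP => i j; rewrite !mxE; field.
  by rewrite scalemxAr.
rewrite /sk mulmxBl -!mulmxA hy hx.
rewrite /xv /yv /Pi trmx_delta.
rewrite mul_delta_mx -!scalemxAr (mulmxA (delta_mx l 0)) mul_delta_mx.
by rewrite mulmxBl mul1mx -scalemxAl !mulmxA.
Qed.


Lemma edge_ineq n p (S T : 'M[R]_(n,p)) : (0 < p)%N -> (3 * (p + 1) <= 2 * n)%N ->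
  stiefel S -> stiefel T ->
  let q := p%:R * (n%:R - p%:R - 1) + (p%:R + 2) / 4 * << S^T *m T, S^T *m T >>
           + 1/4 * << S, T >> ^+ 2 - (n%:R - (p%:R + 1) / 2) * << S, T >> in
  0 <= q /\ (q = 0 -> S = T).
Proof.
move=> p0 hnp hS hT q.
set P : R := p%:R; set Nn : R := n%:R; set t := << S, T >>; set m2 := << S^T *m T, S^T *m T >>.
have hSS : << S, S >> = P by rewrite /frob_inner hS mxtrace1.
have hTT : << T, T >> = P by rewrite /frob_inner hT mxtrace1.
have dST : << S - T, S - T >> = 2 * P - 2 * t.
  rewrite !(innerBl, innerBr) hSS hTT (innerC T S) -/t; ring.
have ht : t <= P by have := inner_ge0 (S - T); rewrite dST; lra.
have Pp : 1 <= P by rewrite /P (ler_nat R 1 p).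
have hN : 3 * (P + 1) <= 2 * Nn.
  have := hnp; rewrite -(ler_nat R) !natrM natrD /= -/P -/Nn.
  by [].
have hm : t ^+ 2 <= P * m2.
  set M := S^T *m T.
  have tM : << 1%:M, M >> = t by rewrite inner1L.
  have h0 := inner_ge0 (M - (t / P) *: 1%:M).
  move: h0; rewrite !(innerBl, innerBr, innerZl, innerZr) (innerC M 1%:M) tM inner11 -/P -/m2.
  move=> h0.
  have Pnz : P != 0 by rewrite gt_eqF //; lra.
  have e : P * (m2 - t / P * t - t / P * (t - t / P * P)) = P * m2 - t ^+ 2.
    by field.
  have := mulr_ge0 (ltW (lt_le_trans ltr01 Pp)) h0; rewrite e; lra.
have id : 4 * P * q = (P + 2) * (P * m2 - t ^+ 2) + 2 * ((P + 1) * (P - t) ^+ 2)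
                       + 2 * ((P - t) * (P * (2 * Nn - 3 * P - 3))).
  by rewrite /q -/P -/Nn -/t -/m2; field.
have ha0 : 0 <= (P + 2) * (P * m2 - t ^+ 2).
  apply: mulr_ge0; lra.
have hb0 : 0 <= (P + 1) * (P - t) ^+ 2.
  apply: mulr_ge0; first lra.
  exact: sqr_ge0.
have hc0 : 0 <= (P - t) * (P * (2 * Nn - 3 * P - 3)).
  apply: mulr_ge0; first lra.
  apply: mulr_ge0; lra.
split.
  have h4 : 0 <= 4 * P * q.
    rewrite id; move: ha0 hb0 hc0.
    move: ((P + 2) * (P * m2 - t ^+ 2)) ((P + 1) * (P - t) ^+ 2) ((P - t) * (P * (2 * Nn - 3 * P - 3))).
    move=> a b c; lra.
  nra.
move=> q0.
have b1 : (P + 1) * (P - t) ^+ 2 = 0.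
  move: id ha0 hb0 hc0; rewrite q0 mulr0.
  move: ((P + 2) * (P * m2 - t ^+ 2)) ((P + 1) * (P - t) ^+ 2) ((P - t) * (P * (2 * Nn - 3 * P - 3))).
  move=> a b c; lra.
have b2 : (P - t) ^+ 2 = 0.
  by move/eqP: b1; rewrite mulf_eq0 => /orP [/eqP h|/eqP //]; lra.
have tP : t = P by move/eqP: b2; rewrite sqrf_eq0 subr_eq0 => /eqP.
apply/eqP; rewrite -subr_eq0; apply/eqP; apply: inner_eq0.
by rewrite dST tP; ring.
Qed.

End Fin.

Section Final.
Variable R : realType.
Local Notation "<< X , Y >>" := (frob_inner X Y).

Lemma sum4_swap n p N (P : 'I_N -> 'I_N -> bool) (f : 'I_n -> 'I_p -> 'I_N -> 'I_N -> R) :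
  \sum_(k < n) \sum_(l < p) \sum_(u < N) \sum_(v < N | P u v) f k l u v =
  \sum_(u < N) \sum_(v < N | P u v) \sum_(k < n) \sum_(l < p) f k l u v.
Proof.
under eq_bigr do under eq_bigr do under eq_bigr do rewrite big_mkcond.
under [RHS]eq_bigr do rewrite big_mkcond.
have e : forall u v, (if P u v then \sum_(k < n) \sum_(l < p) f k l u v else 0) =
   \sum_(k < n) \sum_(l < p) (if P u v then f k l u v else 0).
  move=> u v; case: (P u v) => //.
  by rewrite big1 // => k _; rewrite big1.
under [RHS]eq_bigr do under eq_bigr do rewrite e.
rewrite /=.
under eq_bigr do rewrite exchange_big.
rewrite exchange_big; apply: eq_bigr => u _.
rewrite [RHS]exchange_big; apply: eq_bigr => k _; by rewrite exchange_big.
Qed.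


Lemma c2_rewrite N n p (e : rel 'I_N) (S : 'I_N -> 'M[R]_(n,p)) (A : 'I_N -> 'M[R]_n) :
  simple_graph e -> (forall u, (A u)^T = - A u) ->
  (forall u, nbr e S u = S u *m ((nbr e S u)^T *m S u)) ->
  let X u := A u *m S u in let Y u := (1/2) *: (A u *m A u *m S u) in
  \sum_(u < N) \sum_(v < N | e u v) (<< Y u, S v >> + << X u, X v >> + << S u, Y v >>) =
  \sum_(u < N) \sum_(v < N | e u v) (<< X u, X v >> - << X u, X u *m ((S v)^T *m S u) >>).
Proof.
move=> sg skA hG X Y.
have a : \sum_(u < N) \sum_(v < N | e u v) << S u, Y v >> =
         \sum_(u < N) \sum_(v < N | e u v) << Y u, S v >>.
  rewrite sum_swap; apply: eq_bigr => u _; apply: eq_big => v.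
    by case: sg => -> _.
  by move=> _; rewrite innerC.
have b : forall u, \sum_(v < N | e u v) << Y u, S v >> =
    - (1/2) * \sum_(v < N | e u v) << X u, X u *m ((S v)^T *m S u) >>.
  move=> u.
  rewrite -inner_sumr -/(nbr e S u) hG.
  rewrite /Y innerZl -mulmxA inner_mull skA mulNmx innerNr (mulmxA (A u) (S u)) -/(X u).
  rewrite /nbr linear_sum /= mulmx_suml mulmx_sumr inner_sumr.
  by rewrite mulrN mulNr.
have e1 : forall u, \sum_(v < N | e u v) (<< Y u, S v >> + << X u, X v >> + << S u, Y v >>) =
   \sum_(v < N | e u v) << Y u, S v >> + \sum_(v < N | e u v) << X u, X v >>
   + \sum_(v < N | e u v) << S u, Y v >>.
  by move=> u; rewrite !big_split.
under eq_bigr do rewrite e1.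
rewrite !big_split /= a.
under [X in X + _ + _]eq_bigr do rewrite b.
under [X in _ + _ + X]eq_bigr do rewrite b.
under [RHS]eq_bigr do rewrite sumrB.
rewrite sumrB -!mulr_sumr.
set P1 := \sum_(i < N) \sum_(v < N | e i v) << X i, X i *m ((S v)^T *m S i) >>.
set P2 := \sum_(i < N) \sum_(v < N | e i v) << X i, X v >>.
by field.
Qed.

End Final.

Unset Implicit Arguments.

Theorem theorem1 (R : realType) (n p N : nat) (e : rel 'I_N) :
  (0 < n)%N -> (0 < p)%N -> (3 * (p + 1) <= 2 * n)%N ->
  simple_graph e -> graph_connected e ->
  forall S : 'I_N -> 'M[R]_(n, p),
    local_minimizer e S -> consensus e S.
Proof.
move=> n0 p0 hnp sg _ S lm.
have hS : on_stiefel_N S by case: lm.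
split => // i j eij.
have hG : forall u, nbr e S u = S u *m ((nbr e S u)^T *m S u).
  move=> u; have fo := first_order u sg lm.
  have fo' : S u *m (nbr e S u)^T = nbr e S u *m (S u)^T.
    by rewrite -fo trmx_mul trmxK.
  by rewrite mulmxA fo' -mulmxA (hS u) mulmx1.
pose Q u v := \sum_(k < n) \sum_(l < p)
   (frob_inner (Pi (S u) (delta_mx k l)) (Pi (S v) (delta_mx k l))
    - frob_inner (Pi (S u) (delta_mx k l)) (Pi (S u) (delta_mx k l) *m ((S v)^T *m S u))).
have C1 : \sum_(u < N) \sum_(v < N | e u v) Q u v <= 0.
  rewrite /Q -sum4_swap; apply: sumr_le0 => k _; apply: sumr_le0 => l _.
  pose A u := sk (xv (S u) k) (yv (S u) l).
  pose lam u := frob_inner (xv (S u) k) (xv (S u) k) * frob_inner (yv (S u) l) (yv (S u) l)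
       - frob_inner (xv (S u) k) (yv (S u) l) ^+ 2.
  have skA : forall u, (A u)^T = - A u by move=> u; exact: sk_skew.
  have cubA : forall u, A u *m A u *m A u = - lam u *: A u by move=> u; exact: sk_cube.
  have [_ c2] := master sg lm skA cubA.
  move: c2; rewrite (c2_rewrite sg skA hG).
  have hX : forall u, A u *m S u = Pi (S u) (delta_mx k l) by move=> u; exact: sk_Pi.
  by under eq_bigr do under eq_bigr do rewrite !hX.
have C2 : forall u v, Q u v = p%:R * (n%:R - p%:R - 1)
     + (p%:R + 2) / 4 * frob_inner ((S u)^T *m S v) ((S u)^T *m S v)
     + 1/4 * frob_inner (S u) (S v) ^+ 2 - (n%:R - (p%:R + 1) / 2) * frob_inner (S u) (S v).
  move=> u v; rewrite /Q.
  under eq_bigr do rewrite sumrB.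
  rewrite sumrB I1 ?I2 //.
  have -> : \tr ((S v)^T *m S u) = frob_inner (S u) (S v) by rewrite innerC.
  by [].
have C3 : forall u v, 0 <= Q u v by move=> u v; rewrite C2; have [] := edge_ineq p0 hnp (hS u) (hS v).
have Qij : Q i j <= 0.
  apply: le_trans C1.
  rewrite (bigD1 i) //= (bigD1 j) //=.
  rewrite -addrA lerDl; apply: addr_ge0.
    by apply: sumr_ge0 => v _; exact: C3.
  by apply: sumr_ge0 => u _; apply: sumr_ge0 => v _; exact: C3.
have Q0 : Q i j = 0 by apply/eqP; rewrite eq_le Qij C3.
have [_ h] := edge_ineq p0 hnp (hS i) (hS j).
by apply: h; rewrite -C2.
Qed.
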